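(* Let $p(z)=z^n+a_nz^{n-1}+\cdots+a_2z+a_1$ be a complex monic polynomial with $n\geq2$ and $a_1\neq0$. If $z\in\mathbb{C}$ is any zero of $p$, then $$|z|\leq\left\{\frac{1}{2}\left(\delta_1+\delta+\sqrt{(\delta_1-\delta)^2+4\delta_2}\right)+1\right\}^{1/8}.$$
   Context: Let $C_p$ be the $n\times n$ matrix whose first row is $(-a_n,-a_{n-1},\dots,-a_2,-a_1)$, whose entries $(k+1,k)$ equal $1$ for $k=1,\dots,n-1$, and whose other entries are $0$. Define numbers $b_j,c_j,d_j$ ($j=1,\dots,n$) by: the first row of $C_p^2$ is $(b_n,b_{n-1},\dots,b_1)$, the first row of $C_p^3$ is $(c_n,\dots,c_1)$, the first row of $C_p^4$ is $(d_n,\dots,d_1)$ (so $b_j=a_na_j-a_{j-1}$, $c_j=-a_nb_j+a_{n-1}a_j-a_{j-2}$ with $a_0=a_{-1}=0$). Set $\alpha=\sum_{j=1}^n|a_j|^2$, $\beta=\sum_{j=1}^n|b_j|^2$, $\gamma=-\sum_{j=1}^n b_j\overline{a_j}$, $\delta=\frac{1}{2}\left(\alpha+\beta+\sqrt{(\alpha-\beta)^2+4|\gamma|^2}\right)$; $\alpha_1=\sum_{j=1}^n|d_j|^2$, $\beta_1=\sum_{j=1}^n|c_j|^2$, $\gamma_1=\sum_{j=1}^n d_j\overline{c_j}$, $\delta_1=\frac12\left(\alpha_1+\beta_1+\sqrt{(\alpha_1-\beta_1)^2+4|\gamma_1|^2}\right)$; $\gamma_2=\sum_{j=1}^n d_j\overline{b_j}$,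 $\gamma_3=\sum_{j=1}^n d_j\overline{a_j}$, $\gamma_4=\sum_{j=1}^n c_j\overline{b_j}$, $\gamma_5=\sum_{j=1}^n c_j\overline{a_j}$, and $\delta_2=\frac12\Big(|\gamma_2|^2+|\gamma_3|^2+|\gamma_4|^2+|\gamma_5|^2+\sqrt{\big((|\gamma_2|^2+|\gamma_3|^2)-(|\gamma_4|^2+|\gamma_5|^2)\big)^2+4|\gamma_2\overline{\gamma_4}+\gamma_3\overline{\gamma_5}|^2}\Big)$. *)

(* Defs.v *)
(* complex numbers modelled by an arbitrary numClosedFieldType C
   (e.g. complex R for R : realType, or algC). *)
From HB Require Import structures.
From mathcomp Require Import all_boot all_order all_algebra.
Set Implicit Arguments. Unset Strict Implicit. Unset Printing Implicit Defensive.
Import Order.TTheory GRing.Theory Num.Theory.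
Local Open Scope ring_scope.

Section Defs.
Variable C : numClosedFieldType.

Definition ent n (M : 'M[C]_n) (i j : nat) : C :=
  match @insub nat (fun k => k < n)%N 'I_n i, @insub nat (fun k => k < n)%N 'I_n j with
  | Some i', Some j' => M i' j'
  | _, _ => 0
  end.

(* Companion matrix C_p: first row (-a_n, ..., -a_1), entries (k+1,k) = 1,
   all other entries 0 (0-indexed here). *)
Definition companion (n : nat) (a : nat -> C) : 'M[C]_n :=
  \matrix_(i < n, k < n)
    (if i == 0%N :> nat then - a (n - k)%N
     else if i == k.+1 :> nat then 1 else 0).

(* b_j, c_j, d_j : the first row of C_p^2, C_p^3, C_p^4 is (x_n, ..., x_1),
   i.e. x_j sits in column n - j (0-indexed). *)
Definition bcoef n (a : nat -> C) (j : nat) : C := ent (companion n a ^+ 2) 0 (n - j).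
Definition ccoef n (a : nat -> C) (j : nat) : C := ent (companion n a ^+ 3) 0 (n - j).
Definition dcoef n (a : nat -> C) (j : nat) : C := ent (companion n a ^+ 4) 0 (n - j).

Definition sumj n (f : nat -> C) : C := \sum_(1 <= j < n.+1) f j.

Definition alpha n (a : nat -> C) : C := sumj n (fun j => `|a j| ^+ 2).
Definition beta n (a : nat -> C) : C := sumj n (fun j => `|bcoef n a j| ^+ 2).
Definition gamma n (a : nat -> C) : C := - sumj n (fun j => bcoef n a j * (a j)^*).
Definition delta n (a : nat -> C) : C :=
  (alpha n a + beta n a
   + sqrtC ((alpha n a - beta n a) ^+ 2 + 4 * `|gamma n a| ^+ 2)) / 2.

Definition alpha1 n (a : nat -> C) : C := sumj n (fun j => `|dcoef n a j| ^+ 2).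
Definition beta1 n (a : nat -> C) : C := sumj n (fun j => `|ccoef n a j| ^+ 2).
Definition gamma1 n (a : nat -> C) : C := sumj n (fun j => dcoef n a j * (ccoef n a j)^*).
Definition delta1 n (a : nat -> C) : C :=
  (alpha1 n a + beta1 n a
   + sqrtC ((alpha1 n a - beta1 n a) ^+ 2 + 4 * `|gamma1 n a| ^+ 2)) / 2.

Definition gamma2 n (a : nat -> C) : C := sumj n (fun j => dcoef n a j * (bcoef n a j)^*).
Definition gamma3 n (a : nat -> C) : C := sumj n (fun j => dcoef n a j * (a j)^*).
Definition gamma4 n (a : nat -> C) : C := sumj n (fun j => ccoef n a j * (bcoef n a j)^*).
Definition gamma5 n (a : nat -> C) : C := sumj n (fun j => ccoef n a j * (a j)^*).
Definition delta2 n (a : nat -> C) : C :=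
  let g2 := `|gamma2 n a| ^+ 2 in let g3 := `|gamma3 n a| ^+ 2 in
  let g4 := `|gamma4 n a| ^+ 2 in let g5 := `|gamma5 n a| ^+ 2 in
  (g2 + g3 + g4 + g5
   + sqrtC (((g2 + g3) - (g4 + g5)) ^+ 2
            + 4 * `|gamma2 n a * (gamma4 n a)^* + gamma3 n a * (gamma5 n a)^*| ^+ 2)) / 2.

Definition peval n (a : nat -> C) (z : C) : C :=
  z ^+ n + \sum_(1 <= k < n.+1) a k * z ^+ k.-1.

End Defs.

(* Main.v *)
Require Import Defs.
From HB Require Import structures.
From mathcomp Require Import all_boot all_order all_algebra.
From mathcomp Require Import ring zify.
Import Order.TTheory GRing.Theory Num.Theory.
Local Open Scope ring_scope.

Section N2.
Context {C : numClosedFieldType}.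
Implicit Types p q r x y w : C.

Definition lam p r q : C := (p + r + sqrtC ((p - r) ^+ 2 + 4 * `|q| ^+ 2)) / 2.

Lemma nneg_real x : 0 <= x -> x \is Num.real.
Proof. by move=> h; rewrite realE h. Qed.

Lemma reW_le w : w + w^* <= 2 * `|w|.
Proof.
have hr : w + w^* \is Num.real by rewrite CrealE; apply/eqP; rewrite raddfD /= conjCK addrC.
apply: (le_trans (real_ler_norm hr)).
by apply: (le_trans (ler_normD _ _)); rewrite norm_conjC mulr2n mulrDl mul1r.
Qed.

Lemma sq_real_ge0 x : x \is Num.real -> 0 <= x ^+ 2.
Proof. by move=> h; rewrite -real_normK // exprn_ge0. Qed.

Lemma lam_facts p r q : 0 <= p -> 0 <= r ->
  [/\ 0 <= lam p r q - p, 0 <= lam p r q - r &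
      (lam p r q - p) * (lam p r q - r) = `|q| ^+ 2].
Proof.
move=> p0 r0.
set D := (p - r) ^+ 2 + 4 * `|q| ^+ 2.
have prR : p - r \is Num.real by rewrite rpredB ?nneg_real.
have D0 : 0 <= D by rewrite addr_ge0 ?sq_real_ge0 // mulr_ge0 ?exprn_ge0 ?ler0n.
set s := sqrtC D.
have s0 : 0 <= s by rewrite sqrtC_ge0.
have s2 : s ^+ 2 = D by rewrite sqrtCK.
have hs : `|p - r| <= s.
  rewrite -(ler_pXn2r (_ : 0 < 2)%N) ?qualifE //= ?normr_ge0 //.
  by rewrite s2 real_normK // /D lerDl mulr_ge0 ?exprn_ge0 ?ler0n.
have hL : lam p r q = (p + r + s) / 2 by [].
have hD : D = (p - r) ^+ 2 + 4 * `|q| ^+ 2 by [].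
rewrite hL; clearbody s D.
have hA : (p + r + s) / 2 - p = (r - p + s) / 2 by field.
have hB : (p + r + s) / 2 - r = (p - r + s) / 2 by field.
split.
- rewrite hA divr_ge0 ?ler0n //; have -> : r - p + s = s - (p - r) by ring.
  by rewrite subr_ge0; apply: le_trans hs; apply: real_ler_norm.
- rewrite hB divr_ge0 ?ler0n //; have -> : p - r + s = s - (r - p) by ring.
  rewrite subr_ge0; apply: le_trans hs; rewrite distrC; apply: real_ler_norm.
  by rewrite rpredB ?nneg_real.
- rewrite hA hB.
  have -> : (r - p + s) / 2 * ((p - r + s) / 2) = (s ^+ 2 - (p - r) ^+ 2) / 4 by field.
  by rewrite s2 hD; field.
Qed.

Lemma lam_ge p r q : 0 <= p -> 0 <= r -> p <= lam p r q /\ 0 <= lam p r q.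
Proof.
move=> p0 r0; have [h1 _ _] := lam_facts p r q p0 r0.
have h : p <= lam p r q by rewrite -subr_ge0.
by split => //; apply: le_trans h.
Qed.

Lemma quad2 p r q x y : 0 <= p -> 0 <= r ->
  p * `|x| ^+ 2 + r * `|y| ^+ 2 + (q * x * y^* + (q * x * y^*)^*)
    <= lam p r q * (`|x| ^+ 2 + `|y| ^+ 2).
Proof.
move=> p0 r0; have [A0 B0 AB] := lam_facts p r q p0 r0.
set A := lam p r q - p in A0 AB *; set B := lam p r q - r in B0 AB *.
rewrite -subr_ge0.
have -> : lam p r q * (`|x| ^+ 2 + `|y| ^+ 2) -
   (p * `|x| ^+ 2 + r * `|y| ^+ 2 + (q * x * y^* + (q * x * y^*)^*))
   = (A * `|x| ^+ 2 + B * `|y| ^+ 2 - 2 * (`|q| * `|x| * `|y|))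
     + (2 * `|q * x * y^*| - (q * x * y^* + (q * x * y^*)^*)).
  by rewrite !normrM norm_conjC /A /B; ring.
apply: addr_ge0; last by rewrite subr_ge0 reW_le.
have [Ae|Apos] := eqVneq A 0.
  rewrite Ae.
  have q0 : `|q| = 0.
    have : `|q| ^+ 2 == 0 by rewrite -AB Ae mul0r.
    by rewrite expf_eq0 => /andP[_ /eqP].
  by rewrite q0 !mul0r mulr0 subr0 add0r mulr_ge0 ?exprn_ge0.
have Agt : 0 < A by rewrite lt_def Apos A0.
rewrite -(pmulr_rge0 _ Agt).
have -> : A * (A * `|x| ^+ 2 + B * `|y| ^+ 2 - 2 * (`|q| * `|x| * `|y|))
   = (A * `|x| - `|q| * `|y|) ^+ 2.
  have e : A * (B * `|y| ^+ 2) = `|q| ^+ 2 * `|y| ^+ 2 by rewrite mulrA AB.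
  rewrite mulrBr mulrDr e; ring.
by apply: sq_real_ge0; rewrite rpredB ?rpredM ?nneg_real ?normr_ge0 ?ltW.
Qed.

End N2.


Section V.
Variable C : numClosedFieldType.
Variable n : nat.
Implicit Types u v : nat -> C.

Definition inner u v : C := sumj n (fun j => u j * (v j)^*).

Lemma inner_conj u v : inner v u = (inner u v)^*.
Proof.
rewrite /inner /sumj rmorph_sum; apply: eq_bigr => j _.
by rewrite rmorphM /= conjCK mulrC.
Qed.

Lemma inner_lin x y x' y' u v u' v' :
  sumj n (fun j => (x * u j + y * v j) * (x' * u' j + y' * v' j)^*) =
  x * x'^* * inner u u' + x * y'^* * inner u v' + y * x'^* * inner v u'
  + y * y'^* * inner v v'.
Proof.
rewrite /inner /sumj !mulr_sumr -!big_split; apply: eq_bigr => j _ /=.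
rewrite !rmorphD !rmorphM; ring.
Qed.

Lemma norm2E u : sumj n (fun j => `|u j| ^+ 2) = inner u u.
Proof. by apply: eq_bigr => j _; rewrite normCK. Qed.

Lemma sumj_ge0 (f : nat -> C) : (forall j, 0 <= f j) -> 0 <= sumj n f.
Proof. by move=> h; apply: sumr_ge0 => j _. Qed.

Lemma normsq_ge0 (x : C) : 0 <= `|x| ^+ 2 :> C.
Proof. by rewrite exprn_ge0. Qed.

Lemma cs2 (e1 e2 u v : C) :
  `|e1 * u + e2 * v| ^+ 2 <= (`|e1| ^+ 2 + `|e2| ^+ 2) * (`|u| ^+ 2 + `|v| ^+ 2).
Proof.
rewrite -subr_ge0.
have -> : (`|e1| ^+ 2 + `|e2| ^+ 2) * (`|u| ^+ 2 + `|v| ^+ 2) - `|e1 * u + e2 * v| ^+ 2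
   = `|e1^* * v - e2^* * u| ^+ 2.
  by rewrite !normCK !rmorphB !rmorphD !rmorphM /= !conjCK; ring.
exact: normsq_ge0.
Qed.

Lemma sq_le_nneg (x y : C) : 0 <= x -> 0 <= y -> x ^+ 2 <= y ^+ 2 -> x <= y.
Proof.
by move=> x0 y0; rewrite (ler_pXn2r (_ : 0 < 2)%N) ?qualifE.
Qed.

Lemma sqrt_nneg (x : C) : 0 <= x -> 0 <= sqrtC x /\ sqrtC x ^+ 2 = x /\ `|sqrtC x| ^+ 2 = x.
Proof.
move=> x0; have s0 : 0 <= sqrtC x by rewrite sqrtC_ge0.
by rewrite ger0_norm // sqrtCK.
Qed.

Lemma quad4 (d c b a : nat -> C) (wd wc wb wa : C)
   (A1 B1 G1 Al Be Ga G2 G3 G4 G5 d1 de d2 : C) :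
  A1 = sumj n (fun j => `|d j| ^+ 2) ->
  B1 = sumj n (fun j => `|c j| ^+ 2) ->
  G1 = sumj n (fun j => d j * (c j)^*) ->
  Al = sumj n (fun j => `|a j| ^+ 2) ->
  Be = sumj n (fun j => `|b j| ^+ 2) ->
  Ga = - sumj n (fun j => b j * (a j)^*) ->
  G2 = sumj n (fun j => d j * (b j)^*) ->
  G3 = sumj n (fun j => d j * (a j)^*) ->
  G4 = sumj n (fun j => c j * (b j)^*) ->
  G5 = sumj n (fun j => c j * (a j)^*) ->
  d1 = lam A1 B1 G1 ->
  de = lam Al Be Ga ->
  d2 = lam (`|G2| ^+ 2 + `|G3| ^+ 2) (`|G4| ^+ 2 + `|G5| ^+ 2)
                (G2 * G4^* + G3 * G5^*) ->
  sumj n (fun j => `|(wd * d j + wc * c j) + (wb * b j + wa * a j)| ^+ 2)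
  <= (d1 + de + sqrtC ((d1 - de) ^+ 2 + 4 * d2)) / 2
     * (`|wd| ^+ 2 + `|wc| ^+ 2 + (`|wb| ^+ 2 + `|wa| ^+ 2)).
Proof.
move=> *; subst.
set A1 := sumj n (fun j => `|d j| ^+ 2).
set B1 := sumj n (fun j => `|c j| ^+ 2).
set G1 := sumj n (fun j => d j * (c j)^*).
set Al := sumj n (fun j => `|a j| ^+ 2).
set Be := sumj n (fun j => `|b j| ^+ 2).
set Ga := - sumj n (fun j => b j * (a j)^*).
set G2 := sumj n (fun j => d j * (b j)^*).
set G3 := sumj n (fun j => d j * (a j)^*).
set G4 := sumj n (fun j => c j * (b j)^*).
set G5 := sumj n (fun j => c j * (a j)^*).
set d1 := lam A1 B1 G1. set de := lam Al Be Ga.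
set d2 := lam (`|G2| ^+ 2 + `|G3| ^+ 2) (`|G4| ^+ 2 + `|G5| ^+ 2) (G2 * G4^* + G3 * G5^*).
set T1 := `|wd| ^+ 2 + `|wc| ^+ 2; set T2 := `|wb| ^+ 2 + `|wa| ^+ 2.
have A10 : 0 <= A1 by apply: sumj_ge0 => j; apply: normsq_ge0.
have B10 : 0 <= B1 by apply: sumj_ge0 => j; apply: normsq_ge0.
have Al0 : 0 <= Al by apply: sumj_ge0 => j; apply: normsq_ge0.
have Be0 : 0 <= Be by apply: sumj_ge0 => j; apply: normsq_ge0.
have [_ d10] := lam_ge _ _ G1 A10 B10.
have [_ de0] := lam_ge _ _ Ga Al0 Be0.
have [_ d20] := lam_ge _ _ (G2 * G4^* + G3 * G5^*)
   (addr_ge0 (normsq_ge0 G2) (normsq_ge0 G3)) (addr_ge0 (normsq_ge0 G4) (normsq_ge0 G5)).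
have T10 : 0 <= T1 by rewrite addr_ge0 ?normsq_ge0.
have T20 : 0 <= T2 by rewrite addr_ge0 ?normsq_ge0.
set U1 := fun j => wd * d j + wc * c j.
set U2 := fun j => wb * b j + wa * a j.
set I := inner U1 U2.
have hN : sumj n (fun j => `|U1 j + U2 j| ^+ 2)
   = inner U1 U1 + inner U2 U2 + (I + I^*).
  rewrite norm2E /I -inner_conj.
  have := inner_lin 1 1 1 1 U1 U2 U1 U2.
  rewrite /inner !conjC1 !mulr1 !mul1r => e.
  have h1 : sumj n (fun j => (U1 j + U2 j) * (U1 j + U2 j)^*) =
     sumj n (fun j => (1 * U1 j + 1 * U2 j) * (1 * U1 j + 1 * U2 j)^*).
    by apply: eq_bigr => j _; rewrite !mul1r.
  rewrite h1 e; ring.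
have hN1 : inner U1 U1 = A1 * `|wd| ^+ 2 + B1 * `|wc| ^+ 2
    + (G1 * wd * wc^* + (G1 * wd * wc^*)^*).
  rewrite /inner /U1 inner_lin -!norm2E (inner_conj d c) !normCK /inner.
  rewrite -/A1 -/B1 -/G1 !rmorphM /= conjCK; ring.
have hN2 : inner U2 U2 = Al * `|- wa^*| ^+ 2 + Be * `|wb^*| ^+ 2
    + (Ga * (- wa^*) * (wb^*)^* + (Ga * (- wa^*) * (wb^*)^*)^*).
  rewrite /inner /U2 inner_lin -!norm2E (inner_conj b a) !normCK /inner.
  rewrite /Ga -/Al -/Be !rmorphM !rmorphN /= !conjCK; ring.
have hI : I = (wd * G2 + wc * G4) * wb^* + (wd * G3 + wc * G5) * wa^*.
  rewrite /I /inner /U1 /U2 inner_lin /inner -/G2 -/G3 -/G4 -/G5; ring.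
have q1 := quad2 _ _ G1 wd wc A10 B10.
have q2 := quad2 _ _ Ga (- wa^*) (wb^*) Al0 Be0.
rewrite normrN !norm_conjC in hN2 q2.
set sd := sqrtC d2; set s1 := sqrtC T1; set s2 := sqrtC T2.
have [sd0 [sd2 sdn]] := sqrt_nneg _ d20.
have [s10 [s12 s1n]] := sqrt_nneg _ T10.
have [s20 [s22 s2n]] := sqrt_nneg _ T20.
have hIb : I + I^* <= sd * s1 * s2 + (sd * s1 * s2)^*.
  rewrite [(sd * s1 * s2)^*]geC0_conj ?mulr_ge0 //; apply: (le_trans (reW_le I)).
  suff hI2 : `|I| <= sd * s1 * s2 by rewrite mulr2n mulrDl mul1r lerD.
  apply: sq_le_nneg => //; rewrite ?mulr_ge0 //.
  rewrite !exprMn sd2 s12 s22 hI.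
  apply: (le_trans (cs2 _ _ _ _)); rewrite !norm_conjC -/T2.
  apply: ler_wpM2r => //.
  have -> : `|wd * G2 + wc * G4| ^+ 2 + `|wd * G3 + wc * G5| ^+ 2 =
     (`|G2| ^+ 2 + `|G3| ^+ 2) * `|wd| ^+ 2 + (`|G4| ^+ 2 + `|G5| ^+ 2) * `|wc| ^+ 2
     + ((G2 * G4^* + G3 * G5^*) * wd * wc^* + ((G2 * G4^* + G3 * G5^*) * wd * wc^*)^*).
    by rewrite !normCK !rmorphD !rmorphM /= !rmorphD !rmorphM /= !conjCK; ring.
  by apply: quad2; rewrite addr_ge0 ?normsq_ge0.
have q3 := quad2 _ _ sd s1 s2 d10 de0.
have lamE : forall p r, lam p r sd = (p + r + sqrtC ((p - r) ^+ 2 + 4 * d2)) / 2.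
  by move=> p r; rewrite /lam sdn.
rewrite s1n s2n lamE in q3.
apply: le_trans q3.
change (sumj n (fun j => `|U1 j + U2 j| ^+ 2) <= d1 * T1 + de * T2 + (sd * s1 * s2^* + (sd * s1 * s2^*)^*)).
rewrite (geC0_conj s20) hN hN1 hN2.
apply: lerD; last exact: hIb.
apply: lerD; first exact: q1.
by rewrite /T2 [X in _ <= _ * X]addrC; exact: q2.
Qed.
End V.


Section M.
Variable C : numClosedFieldType.

Lemma sumj_rev n (F : nat -> C) : \sum_(k < n) F (n - k)%N = sumj n F.
Proof.
rewrite /sumj big_add1 /= big_nat_rev /= big_mkord.
by apply: eq_bigr => i _; congr F; have := ltn_ord i; lia.
Qed.

Lemma sumj_shift n (F : nat -> C) : sumj n (fun j => F j.-1) = \sum_(0 <= m < n) F m.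
Proof. by rewrite /sumj big_add1. Qed.

Variables (n' : nat) (a : nat -> C) (z : C).
Local Notation n := n'.+1.
Hypothesis hp : peval n a z = 0.

Definition xv : 'cV[C]_n := \col_(k < n) z ^+ (n - k.+1).

Lemma Cx : companion n a *m xv = z *: xv.
Proof.
apply/matrixP => i j; rewrite !mxE.
under eq_bigr => k _ do rewrite !mxE.
case: i => [[|i] hi] /=.
- under eq_bigr => k _ do rewrite mulNr.
  rewrite sumrN.
  have e := sumj_rev n (fun j => a j * z ^+ j.-1).
  rewrite /= in e.
  rewrite (eq_bigr (fun k : 'I_n => a (n - k)%N * z ^+ (n - k)%N.-1)); last first.
    by move=> k _; congr (_ * z ^+ _); lia.
  rewrite e subn1 /= -exprS.
  by move: hp; rewrite /peval /sumj => /eqP; rewrite addr_eq0 => /eqP ->. 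
- rewrite (bigD1 (Ordinal (ltnW hi))) //= eqxx mul1r big1 ?addr0; last first.
    by move=> k /negbTE hk; rewrite eqSS; case: eqP => [e|_]; [ move: hk; rewrite (_ : k = Ordinal (ltnW hi)) ?eqxx //; apply: val_inj | rewrite mul0r].
  by rewrite -exprS; congr (z ^+ _); lia.
Qed.

Lemma Cmx m : companion n a ^+ m *m xv = z ^+ m *: xv.
Proof.
elim: m => [|m IH]; first by rewrite expr0 scale1r mul1mx.
by rewrite exprS -mulmxE -mulmxA IH -scalemxAr Cx scalerA -exprSr.
Qed.

Lemma KEY m : sumj n (fun j => ent (companion n a ^+ m) 0 (n - j) * z ^+ j.-1) = z ^+ (m + n').
Proof.
have := congr1 (fun M : 'M[C]_(n,1) => M ord0 ord0) (Cmx m); rewrite !mxE /= => e.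
rewrite -sumj_rev /= exprD. rewrite subn1 in e. rewrite -e.
apply: eq_bigr => k _; rewrite mxE.
have hk : (n - (n - k) < n)%N by rewrite subKn ?ltn_ord // ltnW.
rewrite /ent (insubT (fun k => k < n)%N (ltn0Sn n')) (insubT (fun k => k < n)%N hk) /=.
congr (_ * z ^+ _); last by lia.
congr (_ _ _); apply: val_inj => /=; rewrite subKn //; exact: ltnW (ltn_ord k).
Qed.

End M.


Lemma amgm (C : numClosedFieldType) (u v t : C) : 0 < t -> 0 <= u -> 0 <= v ->
  2 * (u * v) <= u ^+ 2 / t + t * v ^+ 2.
Proof.
move=> t0 u0 v0; rewrite -subr_ge0.
have tn : t != 0 by rewrite gt_eqF.
have -> : u ^+ 2 / t + t * v ^+ 2 - 2 * (u * v) = (u - t * v) ^+ 2 / t by field.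
apply: divr_ge0; last exact: ltW.
apply: sq_real_ge0; apply: rpredB; first exact: nneg_real. apply: nneg_real; apply: mulr_ge0 => //; exact: ltW.
Qed.

Lemma cs_amgm (C : numClosedFieldType) n (V w : nat -> C) t : 0 < t ->
  2 * `|sumj n (fun j => V j * w j)| <=
  sumj n (fun j => `|V j| ^+ 2) / t + t * sumj n (fun j => `|w j| ^+ 2).
Proof.
move=> t0.
apply: (le_trans (ler_wpM2l _ (ler_norm_sum _ _ _))); first by rewrite ler0n.
rewrite /sumj mulr_sumr mulr_suml mulr_sumr -big_split /=.
apply: ler_sum => j _; rewrite normrM; exact: amgm.
Qed.

Theorem mainTheorem14 (C : numClosedFieldType) (n : nat) (a : nat -> C) (z : C) :
  (2 <= n)%N -> a 1%N != 0 -> peval n a z = 0 ->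
  `|z| <= 8.-root ((delta1 n a + delta n a
                    + sqrtC ((delta1 n a - delta n a) ^+ 2 + 4 * delta2 n a)) / 2 + 1).
Proof.
move=> hn _.
case: n hn a => [//|n'] hn a hp.
set L := (delta1 _ a + _ + _) / 2.
have Kd := KEY _ _ _ _ hp 4; have Kc := KEY _ _ _ _ hp 3; have Kb := KEY _ _ _ _ hp 2.
have Ka : sumj n'.+1 (fun j => a j * z ^+ j.-1) = - z ^+ n'.+1.
  by apply/eqP; rewrite -addr_eq0 addrC -/(peval _ _ _) hp.
set sd := z ^+ (4 + n'); set sc := z ^+ (3 + n'); set sb := z ^+ (2 + n').
set sa := - z ^+ n'.+1.
pose V j := (sd^* * dcoef n'.+1 a j + sc^* * ccoef n'.+1 a j)
          + (sb^* * bcoef n'.+1 a j + sa^* * a j).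
set S := `|sd| ^+ 2 + `|sc| ^+ 2 + (`|sb| ^+ 2 + `|sa| ^+ 2).
have hQ : sumj n'.+1 (fun j => `|V j| ^+ 2) <= L * S.
  have := @quad4 C n'.+1 (dcoef n'.+1 a) (ccoef n'.+1 a) (bcoef n'.+1 a) a
    (sd^*) (sc^*) (sb^*) (sa^*) _ _ _ _ _ _ _ _ _ _ (delta1 n'.+1 a) (delta n'.+1 a) (delta2 n'.+1 a) erefl erefl erefl erefl erefl erefl erefl erefl erefl erefl
    erefl erefl (_ : delta2 n'.+1 a = _).
  rewrite !norm_conjC; apply; by rewrite /delta2 /lam addrA.
have hdot : sumj n'.+1 (fun j => V j * z ^+ j.-1) = S.
  have -> : sumj n'.+1 (fun j => V j * z ^+ j.-1) =
     sd^* * sumj n'.+1 (fun j => dcoef n'.+1 a j * z ^+ j.-1)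
     + sc^* * sumj n'.+1 (fun j => ccoef n'.+1 a j * z ^+ j.-1)
     + (sb^* * sumj n'.+1 (fun j => bcoef n'.+1 a j * z ^+ j.-1)
     + sa^* * sumj n'.+1 (fun j => a j * z ^+ j.-1)).
    rewrite /sumj !mulr_sumr -!big_split; apply: eq_bigr => j _ /=; rewrite /V; ring.
  rewrite [sumj _ (fun j => dcoef _ _ _ * _)]Kd [sumj _ (fun j => ccoef _ _ _ * _)]Kc.
  rewrite [sumj _ (fun j => bcoef _ _ _ * _)]Kb Ka /S !normCKC.
  by rewrite -/sd -/sc -/sb -/sa.
have S0 : 0 <= S by rewrite !addr_ge0 ?exprn_ge0.
have d2E : delta2 n'.+1 a = lam (`|gamma2 n'.+1 a| ^+ 2 + `|gamma3 n'.+1 a| ^+ 2)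
   (`|gamma4 n'.+1 a| ^+ 2 + `|gamma5 n'.+1 a| ^+ 2)
   (gamma2 n'.+1 a * (gamma4 n'.+1 a)^* + gamma3 n'.+1 a * (gamma5 n'.+1 a)^*).
  by rewrite /delta2 /lam addrA.
have nsq (x : C) : 0 <= `|x| ^+ 2 by rewrite exprn_ge0.
have d20 : 0 <= delta2 n'.+1 a.
  by rewrite d2E; case: (lam_ge _ _ (gamma2 n'.+1 a * (gamma4 n'.+1 a)^* + gamma3 n'.+1 a * (gamma5 n'.+1 a)^*) (addr_ge0 (nsq (gamma2 n'.+1 a)) (nsq (gamma3 n'.+1 a))) (addr_ge0 (nsq (gamma4 n'.+1 a)) (nsq (gamma5 n'.+1 a)))).
have d10 : 0 <= delta1 n'.+1 a.
  by case: (lam_ge _ _ (gamma1 n'.+1 a) (@sumj_ge0 C n'.+1 _ (fun j => nsq (dcoef n'.+1 a j))) (@sumj_ge0 C n'.+1 _ (fun j => nsq (ccoef n'.+1 a j)))).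
have de0 : 0 <= delta n'.+1 a.
  by case: (lam_ge _ _ (gamma n'.+1 a) (@sumj_ge0 C n'.+1 _ (fun j => nsq (a j))) (@sumj_ge0 C n'.+1 _ (fun j => nsq (bcoef n'.+1 a j)))).
have L0 : 0 <= L.
  have [_ [_ sn]] := sqrt_nneg _ _ d20.
  have -> : L = lam (delta1 n'.+1 a) (delta n'.+1 a) (sqrtC (delta2 n'.+1 a)) by rewrite /lam sn.
  by case: (lam_ge _ _ (sqrtC (delta2 n'.+1 a)) d10 de0).
pose f m := `|z ^+ m| ^+ 2.
have f0 m : 0 <= f m by rewrite /f exprn_ge0.
set N := sumj n'.+1 (fun j => `|z ^+ j.-1| ^+ 2).
have NE : N = \sum_(0 <= m < n'.+1) f m by exact: (sumj_shift _ _ f).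
have N1 : 1 <= N.
  rewrite NE big_ltn // {1}/f expr0 normr1 expr1n lerDl.
  by apply: sumr_ge0 => m _.
have N0 : 0 < N by apply: lt_le_trans N1; rewrite ltr01.
have key t : 0 < t -> 2 * S <= L * S / t + t * N.
  move=> t0; have := @cs_amgm C n'.+1 V (fun j => z ^+ j.-1) t t0.
  rewrite hdot ger0_norm // => h; apply: le_trans h _.
  rewrite lerD2r ler_wpM2r // invr_ge0 ltW //.
have SLN : S <= L * N.
  have [Le|Lpos] := eqVneq L 0.
    rewrite Le mul0r; move: S0; rewrite le_eqVlt => /orP[/eqP <-//|Spos].
    have := key (S / N); rewrite Le !mul0r add0r divfK ?gt_eqF // divr_gt0 //.
    move=> /(_ isT) h; have : S < 2 * S by rewrite mulr2n mulrDl mul1r ltrDr.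
    by rewrite lt_leAnge h andbF.
  have Lgt : 0 < L by rewrite lt_def Lpos L0.
  have := key L Lgt; rewrite mulrAC divff ?gt_eqF // mul1r mulr2n mulrDl mul1r.
  by rewrite lerD2l.
have hsum : `|z| ^+ 8 * N <= N + S.
  have e1 : `|z| ^+ 8 * N = \sum_(4 <= m < n'.+1 + 4) f m.
    rewrite NE mulr_sumr (big_addn 0 _ 4) addnK; apply: eq_bigr => m _.
    by rewrite /f !normrX -!exprM -exprD; congr (_ ^+ _); lia.
  have e2 : N + S = \sum_(0 <= m < n'.+1 + 4) f m.
    rewrite NE [RHS](@big_cat_nat _ _ _ n'.+1 0 (n'.+1+4)) ?leq_addr //.
    congr (_ + _).
    rewrite big_ltn; last lia.
    rewrite big_ltn; last lia.
    rewrite big_ltn; last lia.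
    rewrite big_ltn; last lia.
    rewrite big_geq; last lia.
    rewrite /S /f /sd /sc /sb /sa normrN /= addr0.
    have -> : (4 + n' = n'.+1.+1.+1.+1)%N by lia.
    have -> : (3 + n' = n'.+1.+1.+1)%N by lia.
    have -> : (2 + n' = n'.+1.+1)%N by lia.
    ring.
  rewrite e1 e2 [X in _ <= X](@big_cat_nat _ _ _ 4 0 (n'.+1+4)) // ?leq_addl // lerDr.
  by apply: sumr_ge0 => m _.
have h8 : `|z| ^+ 8 <= L + 1.
  rewrite -(ler_pM2r N0); apply: le_trans hsum _.
  by rewrite mulrDl mul1r addrC lerD2r.
have L10 : 0 <= L + 1 by rewrite addr_ge0.
rewrite -(exprCK (n := 8) _ (normr_ge0 z)) // ler_rootC // qualifE /= ?exprn_ge0.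
all: by rewrite ?normr_ge0.
Qed.
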